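(* None of the following $4$-dimensional superalgebras (each with $\dim A_0=\dim A_1=2$) admits a superbialgebra structure (even linear $\Delta:A\to A\otimes A$, $\varepsilon:A\to\mathbb{K}$ making it a superbialgebra): (1|2) $\mathbb{K}^4$ with $A_0=\mathrm{span}\{(1,1,1,1),(1,1,0,0)\}$, $A_1=\mathrm{span}\{(1,-1,0,0),(0,0,1,-1)\}$; (3|3) $\mathbb{K}[x]/(x^2)\times\mathbb{K}[y]/(y^2)$ with $A_0=\mathrm{span}\{(1,1),(x,y)\}$, $A_1=\mathrm{span}\{(1,-1),(x,-y)\}$; (5|1) $\mathbb{K}[x]/(x^4)$ with $A_0=\mathrm{span}\{1,x^2\}$, $A_1=\mathrm{span}\{x,x^3\}$; (7|2) $\mathbb{K}[x,y]/(x^2,y^2)$ with $A_0=\mathrm{span}\{1,x\}$, $A_1=\mathrm{span}\{y,xy\}$; (7|3) $\mathbb{K}[x,y]/(x^2,y^2)$ with $A_0=\mathrm{span}\{1,xy\}$, $A_1=\mathrm{span}\{x,y\}$; (8|3) $\mathbb{K}[x,y]/(x^3,xy,y^2)$ with $A_0=\mathrm{span}\{1,x^2\}$, $A_1=\mathrm{span}\{x,y\}$; (10|1) $M_2(\mathbb{K})$ with $A_0$ the diagonal matrices and $A_1$ the off-diagonal matrices; (11|3) the algebra $B=\{a(E_{11}+E_{22})+b(E_{33}+E_{44})+cE_{31}+dE_{24}\}\subset M_4(\mathbb{K})$ with $A_0=\mathrm{span}\{I_4,\,E_{24}+E_{31}\}$, $A_1=\mathrm{span}\{E_{11}+E_{22}-E_{33}-E_{44},\,E_{31}-E_{24}\}$;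 (12|1) $\mathbb{K}\langle x,y\rangle/(x^2,y^2,xy+yx)$ with $A_0=\mathrm{span}\{1,x\}$, $A_1=\mathrm{span}\{y,xy\}$; (16|1) $\mathbb{K}\langle x,y\rangle/(x^2,y^2,yx)$ with $A_0=\mathrm{span}\{1,x\}$, $A_1=\mathrm{span}\{y,xy\}$; (16|2) the same algebra with $A_0=\mathrm{span}\{1,y\}$, $A_1=\mathrm{span}\{x,xy\}$; (16|3) the same algebra with $A_0=\mathrm{span}\{1,xy\}$, $A_1=\mathrm{span}\{x,y\}$; (18;λ|1) for $\lambda\in\mathbb{K}\setminus\{-1,0,1\}$, $\mathbb{K}\langle x,y\rangle/(x^2,y^2,yx-\lambda xy)$ with $A_0=\mathrm{span}\{1,x\}$, $A_1=\mathrm{span}\{y,xy\}$; (18;λ|2) the same algebra with $A_0=\mathrm{span}\{1,xy\}$, $A_1=\mathrm{span}\{x,y\}$; (19|1) $\mathbb{K}\langle x,y\rangle/(y^2,\,x^2+yx,\,xy+yx)$ with $A_0=\mathrm{span}\{1,xy\}$, $A_1=\mathrm{span}\{x,y\}$.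
   Context: $\mathbb{K}$ is an algebraically closed field of characteristic $0$. A superalgebra is an associative unital $\mathbb{K}$-algebra $A=A_0\oplus A_1$ with a $\mathbb{Z}/2\mathbb{Z}$-grading such that $A_iA_j\subseteq A_{i+j}$ and $1\in A_0$; $|a|$ denotes the degree. $A\otimes A$ has product $(a\otimes b)(c\otimes d)=(-1)^{|b||c|}ac\otimes bd$. A superbialgebra is a superalgebra with even linear maps $\Delta:A\to A\otimes A$, $\varepsilon:A\to\mathbb{K}$ ($\mathbb{K}$ in degree $0$) which are coassociative and counital and are unital algebra homomorphisms. $E_{ij}$ denotes the matrix unit. $\mathbb{K}[x,y]/I$ is a quotient of the commutative polynomial ring, $\mathbb{K}\langle x,y\rangle/I$ of the free associative algebra. *)

(* Defs.v *)
From HB Require Import structures.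
From mathcomp Require Import all_boot all_order all_algebra.
Set Implicit Arguments. Unset Strict Implicit. Unset Printing Implicit Defensive.
Import Order.TTheory GRing.Theory.
Local Open Scope ring_scope.

(* 4-dimensional superalgebras given by a homogeneous basis e_0,...,e_3      *)
(* with e_0 = 1, e_0,e_1 even and e_2,e_3 odd (dim A_0 = dim A_1 = 2).        *)
(* The multiplication is given by structure constants:                       *)
(*    e_i * e_j = \sum_k mu i j k e_k.                                       *)

(* parity of basis vector e_i : true = odd *)
Definition par (i : 'I_4) : bool := (2 <= i)%N.

Definition ksign (K : nzRingType) (a b : 'I_4) : K := (-1) ^+ (par a && par b).

Definition unitvec (K : nzRingType) (i : nat) : seq K := rcons (nseq i 0) 1.

(* Structure constants from the products e_i e_j for 1 <= i,j <= 3, given as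
   coordinate lists [:: c0; c1; c2; c3]; e_0 is the unit. *)
Definition mk_tbl (K : nzRingType) (m : nat -> nat -> seq K) :
  'I_4 -> 'I_4 -> 'I_4 -> K :=
  fun i j k => nth 0 (if val i == 0%N then unitvec K j
                      else if val j == 0%N then unitvec K i
                      else m (val i) (val j)) k.

(* A superbialgebra structure on the superalgebra with structure constants mu:
   Delta(e_i) = \sum_(j,k) d i j k e_j (x) e_k, eps(e_i) = eps i. *)
Definition is_superbialg (K : nzRingType) (mu : 'I_4 -> 'I_4 -> 'I_4 -> K)
  (d : 'I_4 -> 'I_4 -> 'I_4 -> K) (eps : 'I_4 -> K) : Prop :=
      (forall i j k, par j (+) par k != par i -> d i j k = 0) /\
      (* eps even (K concentrated in degree 0) *)
      (forall i, par i -> eps i = 0) /\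
      (* coassociativity: (Delta (x) id) Delta = (id (x) Delta) Delta *)
      (forall i a b c, \sum_(j < 4) d i j c * d j a b
                       = \sum_(k < 4) d i a k * d k b c) /\
      (* counitality: (eps (x) id) Delta = id = (id (x) eps) Delta *)
      ((forall i k, \sum_(j < 4) d i j k * eps j = (i == k)%:R)
        /\ (forall i j, \sum_(k < 4) d i j k * eps k = (i == j)%:R)) /\
      (* Delta is a unital algebra homomorphism A -> A (x) A (super tensor
         product algebra) *)
      ((forall a b, d ord0 a b = ((a == ord0) && (b == ord0))%:R)
        /\ (forall i j a b,
              \sum_(k < 4) mu i j k * d k a b
              = \sum_(a1 < 4) \sum_(b1 < 4) \sum_(a2 < 4) \sum_(b2 < 4)
                  d i a1 b1 * d j a2 b2 * ksign K b1 a2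
                  * mu a1 a2 a * mu b1 b2 b)) /\
      (eps ord0 = 1
        /\ (forall i j, \sum_(k < 4) mu i j k * eps k = eps i * eps j)).

Definition admits_superbialg (K : nzRingType) (mu : 'I_4 -> 'I_4 -> 'I_4 -> K)
  : Prop := exists d eps, is_superbialg mu d eps.

Section Tables.
Variable K : nzRingType.
Local Notation z := [:: (0:K); 0; 0; 0].
Local Notation v0 := [:: (1:K); 0; 0; 0].
Local Notation v1 := [:: (0:K); 1; 0; 0].
Local Notation v2 := [:: (0:K); 0; 1; 0].
Local Notation v3 := [:: (0:K); 0; 0; 1].

(* (1|2): K^4, e0=(1,1,1,1), e1=(1,1,0,0), e2=(1,-1,0,0), e3=(0,0,1,-1) *)
Definition A1_2 := mk_tbl (fun i j =>
  match i, j with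
  | 1, 1 => v1 | 1, 2 => v2 | 2, 1 => v2 | 2, 2 => v1
  | 3, 3 => [:: 1; -1; 0; 0]%R
  | _, _ => z end)%N.

(* (3|3): K[x]/(x^2) x K[y]/(y^2), e0=(1,1), e1=(x,y), e2=(1,-1), e3=(x,-y) *)
Definition A3_3 := mk_tbl (fun i j =>
  match i, j with
  | 1, 2 => v3 | 2, 1 => v3 | 2, 2 => v0 | 2, 3 => v1 | 3, 2 => v1
  | _, _ => z end)%N.

(* (5|1): K[x]/(x^4), e0=1, e1=x^2, e2=x, e3=x^3 *)
Definition A5_1 := mk_tbl (fun i j =>
  match i, j with
  | 1, 2 => v3 | 2, 1 => v3 | 2, 2 => v1
  | _, _ => z end)%N.

(* (7|2): K[x,y]/(x^2,y^2), e0=1, e1=x, e2=y, e3=xy *)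
Definition A7_2 := mk_tbl (fun i j =>
  match i, j with
  | 1, 2 => v3 | 2, 1 => v3
  | _, _ => z end)%N.

(* (7|3): K[x,y]/(x^2,y^2), e0=1, e1=xy, e2=x, e3=y *)
Definition A7_3 := mk_tbl (fun i j =>
  match i, j with
  | 2, 3 => v1 | 3, 2 => v1
  | _, _ => z end)%N.

(* (8|3): K[x,y]/(x^3,xy,y^2), e0=1, e1=x^2, e2=x, e3=y *)
Definition A8_3 := mk_tbl (fun i j =>
  match i, j with
  | 2, 2 => v1
  | _, _ => z end)%N.

(* (10|1): M_2(K), e0=I, e1=E11, e2=E12, e3=E21 *)
Definition A10_1 := mk_tbl (fun i j =>
  match i, j with
  | 1, 1 => v1 | 1, 2 => v2 | 2, 3 => v1 | 3, 1 => v3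
  | 3, 2 => [:: 1; -1; 0; 0]%R
  | _, _ => z end)%N.

(* (11|3): B subset M_4(K), e0=I_4, e1=E24+E31, e2=E11+E22-E33-E44,
   e3=E31-E24 *)
Definition A11_3 := mk_tbl (fun i j =>
  match i, j with
  | 1, 2 => v3 | 2, 1 => [:: 0; 0; 0; -1]%R | 2, 2 => v0
  | 2, 3 => [:: 0; -1; 0; 0]%R | 3, 2 => v1
  | _, _ => z end)%N.

(* (12|1): K<x,y>/(x^2,y^2,xy+yx), e0=1, e1=x, e2=y, e3=xy *)
Definition A12_1 := mk_tbl (fun i j =>
  match i, j with
  | 1, 2 => v3 | 2, 1 => [:: 0; 0; 0; -1]%R
  | _, _ => z end)%N.

(* (16|1): K<x,y>/(x^2,y^2,yx), e0=1, e1=x, e2=y, e3=xy *)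
Definition A16_1 := mk_tbl (fun i j =>
  match i, j with
  | 1, 2 => v3
  | _, _ => z end)%N.

(* (16|2): same algebra, e0=1, e1=y, e2=x, e3=xy *)
Definition A16_2 := mk_tbl (fun i j =>
  match i, j with
  | 2, 1 => v3
  | _, _ => z end)%N.

(* (16|3): same algebra, e0=1, e1=xy, e2=x, e3=y *)
Definition A16_3 := mk_tbl (fun i j =>
  match i, j with
  | 2, 3 => v1
  | _, _ => z end)%N.

(* (18;l|1): K<x,y>/(x^2,y^2,yx-l xy), e0=1, e1=x, e2=y, e3=xy *)
Definition A18_1 (l : K) := mk_tbl (fun i j =>
  match i, j with
  | 1, 2 => v3 | 2, 1 => [:: 0; 0; 0; l]%R
  | _, _ => z end)%N.

(* (18;l|2): same algebra, e0=1, e1=xy, e2=x, e3=y *)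
Definition A18_2 (l : K) := mk_tbl (fun i j =>
  match i, j with
  | 2, 3 => v1 | 3, 2 => [:: 0; l; 0; 0]%R
  | _, _ => z end)%N.

(* (19|1): K<x,y>/(y^2, x^2+yx, xy+yx), e0=1, e1=xy, e2=x, e3=y;
   here x^2 = xy, yx = -xy. *)
Definition A19_1 := mk_tbl (fun i j =>
  match i, j with
  | 2, 2 => v1 | 2, 3 => v1 | 3, 2 => [:: 0; -1; 0; 0]%R
  | _, _ => z end)%N.
End Tables.

(* Main.v *)
Require Import Defs.
From HB Require Import structures.
From mathcomp Require Import all_boot all_order all_algebra.
From mathcomp Require Import ring.
From Stdlib Require Import FunctionalExtensionality.
Import GRing.Theory.
Set Implicit Arguments. Unset Strict Implicit.
Local Open Scope ring_scope.

Definition o0 : 'I_4 := @Ordinal 4 0 isT.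
Definition o1 : 'I_4 := @Ordinal 4 1 isT.
Definition o2 : 'I_4 := @Ordinal 4 2 isT.
Definition o3 : 'I_4 := @Ordinal 4 3 isT.

Lemma sum4 (K : nmodType) (F : 'I_4 -> K) :
  \sum_(i < 4) F i = F o0 + F o1 + F o2 + F o3.
Proof.
rewrite !big_ord_recl big_ord0 addr0 !addrA; congr (_ + _ + _ + _); congr F; exact: val_inj.
Qed.

Definition dfun (K : nzRingType) (d : 'I_4 -> 'I_4 -> 'I_4 -> K) :=
  fun i j k => if (val i == 0)%N then ((val j == 0)%N && (val k == 0)%N)%:R
               else if par j (+) par k != par i then 0 else d i j k.
Definition efun (K : nzRingType) (e : 'I_4 -> K) :=
  fun i => if (val i == 0)%N then 1 else if par i then 0 else e i.

Lemma unpack (K : nzRingType) (mu d : 'I_4 -> 'I_4 -> 'I_4 -> K) (eps : 'I_4 -> K) : is_superbialg mu d eps ->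
  d = dfun d /\ eps = efun eps.
Proof.
move=> [Hp [He [_ [_ [[H0 _] [E0 _]]]]]]; split.
  apply: functional_extensionality => i; apply: functional_extensionality => j;
  apply: functional_extensionality => k; rewrite /dfun.
  case: eqP => [i0|_]; last by case: ifP => // /Hp.
  have -> : i = ord0 by exact: val_inj.
  rewrite H0; congr (_%:R); congr (_ && _); apply/eqP/eqP => [/(congr1 val)|/val_inj] //.
apply: functional_extensionality => i; rewrite /efun.
case: eqP => [i0|_]; last by case: ifP => // /He.
by have -> : i = ord0 by exact: val_inj.
Qed.

Lemma sb_eq (K : nzRingType) (L R P : K) : L = R -> P = L - R -> P = 0.
Proof. by move=> -> ->; rewrite subrr. Qed.
Lemma sb_solve (K : nzRingType) (x q P c : K) : P = 0 -> x - q = c * P -> x = q.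
Proof. by move=> -> /eqP; rewrite mulr0 subr_eq0 => /eqP. Qed.
Lemma sb_fin (K : nzRingType) (P c s : K) : P = 0 -> c = s * P -> c = 0.
Proof. by move=> -> ->; rewrite mulr0. Qed.
Lemma sb_pow0 (K : idomainType) (x P c : K) n : P = 0 -> x ^+ n.+1 = c * P -> x = 0.
Proof. by move=> -> /eqP; rewrite mulr0 expf_eq0 /= => /eqP. Qed.

Definition sum4f (K : nmodType) (F : 'I_4 -> K) := F o0 + F o1 + F o2 + F o3.
Lemma sum4E (K : nmodType) (F : 'I_4 -> K) : \sum_(i < 4) F i = sum4f F.
Proof. exact: sum4. Qed.
Lemma homE (K : nzRingType) (mu d : 'I_4 -> 'I_4 -> 'I_4 -> K) i j a b :
  \sum_(a1 < 4) \sum_(b1 < 4) \sum_(a2 < 4) \sum_(b2 < 4)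
     d i a1 b1 * d j a2 b2 * ksign K b1 a2 * mu a1 a2 a * mu b1 b2 b =
  sum4f (fun a1 => sum4f (fun b1 => sum4f (fun a2 => sum4f (fun b2 =>
     d i a1 b1 * d j a2 b2 * ksign K b1 a2 * mu a1 a2 a * mu b1 b2 b)))).
Proof.
rewrite sum4E; congr sum4f; apply: functional_extensionality => a1.
rewrite sum4E; congr sum4f; apply: functional_extensionality => b1.
rewrite sum4E; congr sum4f; apply: functional_extensionality => a2.
by rewrite sum4E.
Qed.


Lemma no_A1_2 (K : fieldType) (K2 : (2%:R : K) != 0) : ~ admits_superbialg (A1_2 K).
Proof.
move=> [d [eps H]]; case: (unpack H) => dE eE.
case: H => [_ [_ [Hco [[Hcl Hcr] [[_ Hhom] [_ Heps]]]]]].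
have E0 : ((1%:R) * (eps o1) : K) = 0.
  move: (Heps o2 o2); rewrite !sum4E; try rewrite dE; try rewrite eE.
  rewrite /A1_2 /mk_tbl /dfun /efun /ksign /sum4f /= => h.
  by apply: (sb_eq h); ring.
have E1 : ((1%:R) + (- 1%:R) * (eps o1) : K) = 0.
  move: (Heps o3 o3); rewrite !sum4E; try rewrite dE; try rewrite eE.
  rewrite /A1_2 /mk_tbl /dfun /efun /ksign /sum4f /= => h.
  by apply: (sb_eq h); ring.
have h0 : (eps o1) = 0.
  apply: (sb_solve (c := (1%:R)) E0); ring.
apply: (negP (oner_neq0 K)); apply/eqP; apply: (sb_fin (s := (1%:R)) E1); rewrite ?h0; ring.
Qed.

Lemma no_A3_3 (K : fieldType) (K2 : (2%:R : K) != 0) : ~ admits_superbialg (A3_3 K).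
Proof.
move=> [d [eps H]]; case: (unpack H) => dE eE.
case: H => [_ [_ [Hco [[Hcl Hcr] [[_ Hhom] [_ Heps]]]]]].
have E0 : ((1%:R) : K) = 0.
  move: (Heps o2 o2); rewrite !sum4E; try rewrite dE; try rewrite eE.
  rewrite /A3_3 /mk_tbl /dfun /efun /ksign /sum4f /= => h.
  by apply: (sb_eq h); ring.
apply: (negP (oner_neq0 K)); apply/eqP; apply: (sb_fin (s := (1%:R)) E0); ring.
Qed.

Lemma no_A5_1 (K : fieldType) (K2 : (2%:R : K) != 0) : ~ admits_superbialg (A5_1 K).
Proof.
move=> [d [eps H]]; case: (unpack H) => dE eE.
case: H => [_ [_ [Hco [[Hcl Hcr] [[_ Hhom] [_ Heps]]]]]].
have E0 : ((- 1%:R) + (1%:R) * (d o2 o0 o2) + (1%:R) * (d o2 o1 o2) * (eps o1) : K) = 0.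
  move: (Hcl o2 o2); rewrite !sum4E; try rewrite dE; try rewrite eE.
  rewrite /A5_1 /mk_tbl /dfun /efun /ksign /sum4f /= => h.
  by apply: (sb_eq h); ring.
have E1 : ((- 1%:R) + (1%:R) * (d o2 o2 o0) + (1%:R) * (d o2 o2 o1) * (eps o1) : K) = 0.
  move: (Hcr o2 o2); rewrite !sum4E; try rewrite dE; try rewrite eE.
  rewrite /A5_1 /mk_tbl /dfun /efun /ksign /sum4f /= => h.
  by apply: (sb_eq h); ring.
have E2 : ((1%:R) * (eps o1) : K) = 0.
  move: (Heps o2 o2); rewrite !sum4E; try rewrite dE; try rewrite eE.
  rewrite /A5_1 /mk_tbl /dfun /efun /ksign /sum4f /= => h.
  by apply: (sb_eq h); ring.
have E3 : ((- 2%:R) * (d o1 o0 o0) * (d o1 o1 o1) + (- 2%:R) * (d o1 o0 o1) * (d o1 o1 o0) + (1%:R) * ((d o1 o2 o2) ^+ 2) : K) = 0.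
  move: (Hhom o1 o1 o1 o1); rewrite homE !sum4E; try rewrite dE; try rewrite eE.
  rewrite /A5_1 /mk_tbl /dfun /efun /ksign /sum4f /= => h.
  by apply: (sb_eq h); ring.
have E4 : ((1%:R) * (d o1 o0 o0) : K) = 0.
  move: (Hhom o2 o2 o0 o0); rewrite homE !sum4E; try rewrite dE; try rewrite eE.
  rewrite /A5_1 /mk_tbl /dfun /efun /ksign /sum4f /= => h.
  by apply: (sb_eq h); ring.
have E5 : ((1%:R) * (d o1 o0 o1) + (- 1%:R) * ((d o2 o0 o2) ^+ 2) : K) = 0.
  move: (Hhom o2 o2 o0 o1); rewrite homE !sum4E; try rewrite dE; try rewrite eE.
  rewrite /A5_1 /mk_tbl /dfun /efun /ksign /sum4f /= => h.
  by apply: (sb_eq h); ring.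
have E6 : ((1%:R) * (d o1 o1 o0) + (- 1%:R) * ((d o2 o2 o0) ^+ 2) : K) = 0.
  move: (Hhom o2 o2 o1 o0); rewrite homE !sum4E; try rewrite dE; try rewrite eE.
  rewrite /A5_1 /mk_tbl /dfun /efun /ksign /sum4f /= => h.
  by apply: (sb_eq h); ring.
have E7 : ((1%:R) * (d o1 o2 o2) : K) = 0.
  move: (Hhom o2 o2 o2 o2); rewrite homE !sum4E; try rewrite dE; try rewrite eE.
  rewrite /A5_1 /mk_tbl /dfun /efun /ksign /sum4f /= => h.
  by apply: (sb_eq h); ring.
have h0 : (d o1 o0 o0) = 0.
  apply: (sb_solve (c := (1%:R)) E4); ring.
have h1 : (d o1 o2 o2) = 0.
  apply: (sb_solve (c := (1%:R)) E7); rewrite ?h0; ring.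
have h2 : (eps o1) = 0.
  apply: (sb_solve (c := (1%:R)) E2); rewrite ?h0 ?h1; ring.
have h3 : (d o1 o0 o1) = (1%:R) * ((d o2 o0 o2) ^+ 2).
  apply: (sb_solve (c := (1%:R)) E5); rewrite ?h0 ?h1 ?h2; ring.
have h4 : (d o1 o1 o0) = (1%:R) * ((d o2 o2 o0) ^+ 2).
  apply: (sb_solve (c := (1%:R)) E6); rewrite ?h0 ?h1 ?h2 ?h3; ring.
have h5 : (d o2 o0 o2) = (1%:R).
  apply: (sb_solve (c := (1%:R)) E0); rewrite ?h0 ?h1 ?h2 ?h3 ?h4; ring.
have h6 : (d o2 o2 o0) = (1%:R).
  apply: (sb_solve (c := (1%:R)) E1); rewrite ?h0 ?h1 ?h2 ?h3 ?h4 ?h5; ring.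
apply: (negP K2); apply/eqP; apply: (sb_fin (s := (- 1%:R)) E3); rewrite ?h0 ?h1 ?h2 ?h3 ?h4 ?h5 ?h6; ring.
Qed.

Lemma no_A7_2 (K : fieldType) (K2 : (2%:R : K) != 0) : ~ admits_superbialg (A7_2 K).
Proof.
move=> [d [eps H]]; case: (unpack H) => dE eE.
case: H => [_ [_ [Hco [[Hcl Hcr] [[_ Hhom] [_ Heps]]]]]].
have E0 : ((1%:R) * (d o1 o0 o0) + (1%:R) * (d o1 o1 o0) * (eps o1) : K) = 0.
  move: (Hcl o1 o0); rewrite !sum4E; try rewrite dE; try rewrite eE.
  rewrite /A7_2 /mk_tbl /dfun /efun /ksign /sum4f /= => h.
  by apply: (sb_eq h); ring.
have E1 : ((- 1%:R) + (1%:R) * (d o1 o0 o1) + (1%:R) * (d o1 o1 o1) * (eps o1) : K) = 0.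
  move: (Hcl o1 o1); rewrite !sum4E; try rewrite dE; try rewrite eE.
  rewrite /A7_2 /mk_tbl /dfun /efun /ksign /sum4f /= => h.
  by apply: (sb_eq h); ring.
have E2 : ((- 1%:R) + (1%:R) * (d o1 o1 o0) + (1%:R) * (d o1 o1 o1) * (eps o1) : K) = 0.
  move: (Hcr o1 o1); rewrite !sum4E; try rewrite dE; try rewrite eE.
  rewrite /A7_2 /mk_tbl /dfun /efun /ksign /sum4f /= => h.
  by apply: (sb_eq h); ring.
have E3 : ((- 1%:R) * ((eps o1) ^+ 2) : K) = 0.
  move: (Heps o1 o1); rewrite !sum4E; try rewrite dE; try rewrite eE.
  rewrite /A7_2 /mk_tbl /dfun /efun /ksign /sum4f /= => h.
  by apply: (sb_eq h); ring.
have E4 : ((- 2%:R) * (d o1 o0 o0) * (d o1 o1 o1) + (- 2%:R) * (d o1 o0 o1) * (d o1 o1 o0) : K) = 0.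
  move: (Hhom o1 o1 o1 o1); rewrite homE !sum4E; try rewrite dE; try rewrite eE.
  rewrite /A7_2 /mk_tbl /dfun /efun /ksign /sum4f /= => h.
  by apply: (sb_eq h); ring.
have h0 : (d o1 o0 o0) = (- 1%:R) * (d o1 o1 o0) * (eps o1).
  apply: (sb_solve (c := (1%:R)) E0); ring.
have h1 : (d o1 o0 o1) = (1%:R) + (- 1%:R) * (d o1 o1 o1) * (eps o1).
  apply: (sb_solve (c := (1%:R)) E1); rewrite ?h0; ring.
have h2 : (d o1 o1 o0) = (1%:R) + (- 1%:R) * (d o1 o1 o1) * (eps o1).
  apply: (sb_solve (c := (1%:R)) E2); rewrite ?h0 ?h1; ring.
have h3 : (eps o1) = 0.
  apply: (sb_pow0 (n := 1) (c := (- 1%:R)) E3); rewrite ?h0 ?h1 ?h2; ring.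
apply: (negP K2); apply/eqP; apply: (sb_fin (s := (- 1%:R)) E4); rewrite ?h0 ?h1 ?h2 ?h3; ring.
Qed.

Lemma no_A7_3 (K : fieldType) (K2 : (2%:R : K) != 0) : ~ admits_superbialg (A7_3 K).
Proof.
move=> [d [eps H]]; case: (unpack H) => dE eE.
case: H => [_ [_ [Hco [[Hcl Hcr] [[_ Hhom] [_ Heps]]]]]].
have E0 : ((1%:R) * (d o2 o0 o3) + (1%:R) * (d o2 o1 o3) * (eps o1) : K) = 0.
  move: (Hcl o2 o3); rewrite !sum4E; try rewrite dE; try rewrite eE.
  rewrite /A7_3 /mk_tbl /dfun /efun /ksign /sum4f /= => h.
  by apply: (sb_eq h); ring.
have E1 : ((- 1%:R) + (1%:R) * (d o3 o0 o3) + (1%:R) * (d o3 o1 o3) * (eps o1) : K) = 0.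
  move: (Hcl o3 o3); rewrite !sum4E; try rewrite dE; try rewrite eE.
  rewrite /A7_3 /mk_tbl /dfun /efun /ksign /sum4f /= => h.
  by apply: (sb_eq h); ring.
have E2 : ((- 1%:R) + (1%:R) * (d o2 o2 o0) + (1%:R) * (d o2 o2 o1) * (eps o1) : K) = 0.
  move: (Hcr o2 o2); rewrite !sum4E; try rewrite dE; try rewrite eE.
  rewrite /A7_3 /mk_tbl /dfun /efun /ksign /sum4f /= => h.
  by apply: (sb_eq h); ring.
have E3 : ((1%:R) * (eps o1) : K) = 0.
  move: (Heps o2 o3); rewrite !sum4E; try rewrite dE; try rewrite eE.
  rewrite /A7_3 /mk_tbl /dfun /efun /ksign /sum4f /= => h.
  by apply: (sb_eq h); ring.
have E4 : ((1%:R) * (d o1 o2 o3) + (1%:R) * (d o2 o0 o3) * (d o3 o2 o0) + (- 1%:R) * (d o2 o2 o0) * (d o3 o0 o3) : K) = 0.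
  move: (Hhom o2 o3 o2 o3); rewrite homE !sum4E; try rewrite dE; try rewrite eE.
  rewrite /A7_3 /mk_tbl /dfun /efun /ksign /sum4f /= => h.
  by apply: (sb_eq h); ring.
have E5 : ((1%:R) * (d o1 o2 o3) + (- 1%:R) * (d o2 o0 o3) * (d o3 o2 o0) + (1%:R) * (d o2 o2 o0) * (d o3 o0 o3) : K) = 0.
  move: (Hhom o3 o2 o2 o3); rewrite homE !sum4E; try rewrite dE; try rewrite eE.
  rewrite /A7_3 /mk_tbl /dfun /efun /ksign /sum4f /= => h.
  by apply: (sb_eq h); ring.
have h0 : (eps o1) = 0.
  apply: (sb_solve (c := (1%:R)) E3); ring.
have h1 : (d o2 o0 o3) = 0.
  apply: (sb_solve (c := (1%:R)) E0); rewrite ?h0; ring.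
have h2 : (d o2 o2 o0) = (1%:R).
  apply: (sb_solve (c := (1%:R)) E2); rewrite ?h0 ?h1; ring.
have h3 : (d o3 o0 o3) = (1%:R).
  apply: (sb_solve (c := (1%:R)) E1); rewrite ?h0 ?h1 ?h2; ring.
have h4 : (d o1 o2 o3) = (1%:R).
  apply: (sb_solve (c := (1%:R)) E4); rewrite ?h0 ?h1 ?h2 ?h3; ring.
apply: (negP K2); apply/eqP; apply: (sb_fin (s := (1%:R)) E5); rewrite ?h0 ?h1 ?h2 ?h3 ?h4; ring.
Qed.

Lemma no_A8_3 (K : fieldType) (K2 : (2%:R : K) != 0) : ~ admits_superbialg (A8_3 K).
Proof.
move=> [d [eps H]]; case: (unpack H) => dE eE.
case: H => [_ [_ [Hco [[Hcl Hcr] [[_ Hhom] [_ Heps]]]]]].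
have E0 : ((- 1%:R) + (1%:R) * (d o2 o0 o2) + (1%:R) * (d o2 o1 o2) * (eps o1) : K) = 0.
  move: (Hcl o2 o2); rewrite !sum4E; try rewrite dE; try rewrite eE.
  rewrite /A8_3 /mk_tbl /dfun /efun /ksign /sum4f /= => h.
  by apply: (sb_eq h); ring.
have E1 : ((1%:R) * (d o2 o3 o0) + (1%:R) * (d o2 o3 o1) * (eps o1) : K) = 0.
  move: (Hcr o2 o3); rewrite !sum4E; try rewrite dE; try rewrite eE.
  rewrite /A8_3 /mk_tbl /dfun /efun /ksign /sum4f /= => h.
  by apply: (sb_eq h); ring.
have E2 : ((- 1%:R) + (1%:R) * (d o3 o3 o0) + (1%:R) * (d o3 o3 o1) * (eps o1) : K) = 0.
  move: (Hcr o3 o3); rewrite !sum4E; try rewrite dE; try rewrite eE.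
  rewrite /A8_3 /mk_tbl /dfun /efun /ksign /sum4f /= => h.
  by apply: (sb_eq h); ring.
have E3 : ((1%:R) * (eps o1) : K) = 0.
  move: (Heps o2 o2); rewrite !sum4E; try rewrite dE; try rewrite eE.
  rewrite /A8_3 /mk_tbl /dfun /efun /ksign /sum4f /= => h.
  by apply: (sb_eq h); ring.
have E4 : ((1%:R) * (d o2 o0 o2) * (d o3 o3 o0) + (- 1%:R) * (d o2 o3 o0) * (d o3 o0 o2) : K) = 0.
  move: (Hhom o2 o3 o3 o2); rewrite homE !sum4E; try rewrite dE; try rewrite eE.
  rewrite /A8_3 /mk_tbl /dfun /efun /ksign /sum4f /= => h.
  by apply: (sb_eq h); ring.
have h0 : (eps o1) = 0.
  apply: (sb_solve (c := (1%:R)) E3); ring.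
have h1 : (d o2 o3 o0) = 0.
  apply: (sb_solve (c := (1%:R)) E1); rewrite ?h0; ring.
have h2 : (d o2 o0 o2) = (1%:R).
  apply: (sb_solve (c := (1%:R)) E0); rewrite ?h0 ?h1; ring.
have h3 : (d o3 o3 o0) = 0.
  apply: (sb_solve (c := (1%:R)) E4); rewrite ?h0 ?h1 ?h2; ring.
apply: (negP (oner_neq0 K)); apply/eqP; apply: (sb_fin (s := (- 1%:R)) E2); rewrite ?h0 ?h1 ?h2 ?h3; ring.
Qed.

Lemma no_A10_1 (K : fieldType) (K2 : (2%:R : K) != 0) : ~ admits_superbialg (A10_1 K).
Proof.
move=> [d [eps H]]; case: (unpack H) => dE eE.
case: H => [_ [_ [Hco [[Hcl Hcr] [[_ Hhom] [_ Heps]]]]]].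
have E0 : ((1%:R) * (eps o1) : K) = 0.
  move: (Heps o2 o3); rewrite !sum4E; try rewrite dE; try rewrite eE.
  rewrite /A10_1 /mk_tbl /dfun /efun /ksign /sum4f /= => h.
  by apply: (sb_eq h); ring.
have E1 : ((1%:R) + (- 1%:R) * (eps o1) : K) = 0.
  move: (Heps o3 o2); rewrite !sum4E; try rewrite dE; try rewrite eE.
  rewrite /A10_1 /mk_tbl /dfun /efun /ksign /sum4f /= => h.
  by apply: (sb_eq h); ring.
have h0 : (eps o1) = 0.
  apply: (sb_solve (c := (1%:R)) E0); ring.
apply: (negP (oner_neq0 K)); apply/eqP; apply: (sb_fin (s := (1%:R)) E1); rewrite ?h0; ring.
Qed.

Lemma no_A11_3 (K : fieldType) (K2 : (2%:R : K) != 0) : ~ admits_superbialg (A11_3 K).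
Proof.
move=> [d [eps H]]; case: (unpack H) => dE eE.
case: H => [_ [_ [Hco [[Hcl Hcr] [[_ Hhom] [_ Heps]]]]]].
have E0 : ((1%:R) : K) = 0.
  move: (Heps o2 o2); rewrite !sum4E; try rewrite dE; try rewrite eE.
  rewrite /A11_3 /mk_tbl /dfun /efun /ksign /sum4f /= => h.
  by apply: (sb_eq h); ring.
apply: (negP (oner_neq0 K)); apply/eqP; apply: (sb_fin (s := (1%:R)) E0); ring.
Qed.

Lemma no_A12_1 (K : fieldType) (K2 : (2%:R : K) != 0) : ~ admits_superbialg (A12_1 K).
Proof.
move=> [d [eps H]]; case: (unpack H) => dE eE.
case: H => [_ [_ [Hco [[Hcl Hcr] [[_ Hhom] [_ Heps]]]]]].
have E0 : ((1%:R) * (d o1 o0 o0) + (1%:R) * (d o1 o1 o0) * (eps o1) : K) = 0.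
  move: (Hcl o1 o0); rewrite !sum4E; try rewrite dE; try rewrite eE.
  rewrite /A12_1 /mk_tbl /dfun /efun /ksign /sum4f /= => h.
  by apply: (sb_eq h); ring.
have E1 : ((- 1%:R) + (1%:R) * (d o1 o0 o1) + (1%:R) * (d o1 o1 o1) * (eps o1) : K) = 0.
  move: (Hcl o1 o1); rewrite !sum4E; try rewrite dE; try rewrite eE.
  rewrite /A12_1 /mk_tbl /dfun /efun /ksign /sum4f /= => h.
  by apply: (sb_eq h); ring.
have E2 : ((- 1%:R) + (1%:R) * (d o1 o1 o0) + (1%:R) * (d o1 o1 o1) * (eps o1) : K) = 0.
  move: (Hcr o1 o1); rewrite !sum4E; try rewrite dE; try rewrite eE.
  rewrite /A12_1 /mk_tbl /dfun /efun /ksign /sum4f /= => h.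
  by apply: (sb_eq h); ring.
have E3 : ((- 1%:R) * ((eps o1) ^+ 2) : K) = 0.
  move: (Heps o1 o1); rewrite !sum4E; try rewrite dE; try rewrite eE.
  rewrite /A12_1 /mk_tbl /dfun /efun /ksign /sum4f /= => h.
  by apply: (sb_eq h); ring.
have E4 : ((- 2%:R) * (d o1 o0 o0) * (d o1 o1 o1) + (- 2%:R) * (d o1 o0 o1) * (d o1 o1 o0) : K) = 0.
  move: (Hhom o1 o1 o1 o1); rewrite homE !sum4E; try rewrite dE; try rewrite eE.
  rewrite /A12_1 /mk_tbl /dfun /efun /ksign /sum4f /= => h.
  by apply: (sb_eq h); ring.
have h0 : (d o1 o0 o0) = (- 1%:R) * (d o1 o1 o0) * (eps o1).
  apply: (sb_solve (c := (1%:R)) E0); ring.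
have h1 : (d o1 o0 o1) = (1%:R) + (- 1%:R) * (d o1 o1 o1) * (eps o1).
  apply: (sb_solve (c := (1%:R)) E1); rewrite ?h0; ring.
have h2 : (d o1 o1 o0) = (1%:R) + (- 1%:R) * (d o1 o1 o1) * (eps o1).
  apply: (sb_solve (c := (1%:R)) E2); rewrite ?h0 ?h1; ring.
have h3 : (eps o1) = 0.
  apply: (sb_pow0 (n := 1) (c := (- 1%:R)) E3); rewrite ?h0 ?h1 ?h2; ring.
apply: (negP K2); apply/eqP; apply: (sb_fin (s := (- 1%:R)) E4); rewrite ?h0 ?h1 ?h2 ?h3; ring.
Qed.

Lemma no_A16_1 (K : fieldType) (K2 : (2%:R : K) != 0) : ~ admits_superbialg (A16_1 K).
Proof.
move=> [d [eps H]]; case: (unpack H) => dE eE.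
case: H => [_ [_ [Hco [[Hcl Hcr] [[_ Hhom] [_ Heps]]]]]].
have E0 : ((1%:R) * (d o1 o0 o0) + (1%:R) * (d o1 o1 o0) * (eps o1) : K) = 0.
  move: (Hcl o1 o0); rewrite !sum4E; try rewrite dE; try rewrite eE.
  rewrite /A16_1 /mk_tbl /dfun /efun /ksign /sum4f /= => h.
  by apply: (sb_eq h); ring.
have E1 : ((- 1%:R) + (1%:R) * (d o1 o0 o1) + (1%:R) * (d o1 o1 o1) * (eps o1) : K) = 0.
  move: (Hcl o1 o1); rewrite !sum4E; try rewrite dE; try rewrite eE.
  rewrite /A16_1 /mk_tbl /dfun /efun /ksign /sum4f /= => h.
  by apply: (sb_eq h); ring.
have E2 : ((- 1%:R) + (1%:R) * (d o1 o1 o0) + (1%:R) * (d o1 o1 o1) * (eps o1) : K) = 0.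
  move: (Hcr o1 o1); rewrite !sum4E; try rewrite dE; try rewrite eE.
  rewrite /A16_1 /mk_tbl /dfun /efun /ksign /sum4f /= => h.
  by apply: (sb_eq h); ring.
have E3 : ((- 1%:R) * ((eps o1) ^+ 2) : K) = 0.
  move: (Heps o1 o1); rewrite !sum4E; try rewrite dE; try rewrite eE.
  rewrite /A16_1 /mk_tbl /dfun /efun /ksign /sum4f /= => h.
  by apply: (sb_eq h); ring.
have E4 : ((- 2%:R) * (d o1 o0 o0) * (d o1 o1 o1) + (- 2%:R) * (d o1 o0 o1) * (d o1 o1 o0) : K) = 0.
  move: (Hhom o1 o1 o1 o1); rewrite homE !sum4E; try rewrite dE; try rewrite eE.
  rewrite /A16_1 /mk_tbl /dfun /efun /ksign /sum4f /= => h.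
  by apply: (sb_eq h); ring.
have h0 : (d o1 o0 o0) = (- 1%:R) * (d o1 o1 o0) * (eps o1).
  apply: (sb_solve (c := (1%:R)) E0); ring.
have h1 : (d o1 o0 o1) = (1%:R) + (- 1%:R) * (d o1 o1 o1) * (eps o1).
  apply: (sb_solve (c := (1%:R)) E1); rewrite ?h0; ring.
have h2 : (d o1 o1 o0) = (1%:R) + (- 1%:R) * (d o1 o1 o1) * (eps o1).
  apply: (sb_solve (c := (1%:R)) E2); rewrite ?h0 ?h1; ring.
have h3 : (eps o1) = 0.
  apply: (sb_pow0 (n := 1) (c := (- 1%:R)) E3); rewrite ?h0 ?h1 ?h2; ring.
apply: (negP K2); apply/eqP; apply: (sb_fin (s := (- 1%:R)) E4); rewrite ?h0 ?h1 ?h2 ?h3; ring.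
Qed.

Lemma no_A16_2 (K : fieldType) (K2 : (2%:R : K) != 0) : ~ admits_superbialg (A16_2 K).
Proof.
move=> [d [eps H]]; case: (unpack H) => dE eE.
case: H => [_ [_ [Hco [[Hcl Hcr] [[_ Hhom] [_ Heps]]]]]].
have E0 : ((1%:R) * (d o1 o0 o0) + (1%:R) * (d o1 o1 o0) * (eps o1) : K) = 0.
  move: (Hcl o1 o0); rewrite !sum4E; try rewrite dE; try rewrite eE.
  rewrite /A16_2 /mk_tbl /dfun /efun /ksign /sum4f /= => h.
  by apply: (sb_eq h); ring.
have E1 : ((- 1%:R) + (1%:R) * (d o1 o0 o1) + (1%:R) * (d o1 o1 o1) * (eps o1) : K) = 0.
  move: (Hcl o1 o1); rewrite !sum4E; try rewrite dE; try rewrite eE.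
  rewrite /A16_2 /mk_tbl /dfun /efun /ksign /sum4f /= => h.
  by apply: (sb_eq h); ring.
have E2 : ((- 1%:R) + (1%:R) * (d o1 o1 o0) + (1%:R) * (d o1 o1 o1) * (eps o1) : K) = 0.
  move: (Hcr o1 o1); rewrite !sum4E; try rewrite dE; try rewrite eE.
  rewrite /A16_2 /mk_tbl /dfun /efun /ksign /sum4f /= => h.
  by apply: (sb_eq h); ring.
have E3 : ((- 1%:R) * ((eps o1) ^+ 2) : K) = 0.
  move: (Heps o1 o1); rewrite !sum4E; try rewrite dE; try rewrite eE.
  rewrite /A16_2 /mk_tbl /dfun /efun /ksign /sum4f /= => h.
  by apply: (sb_eq h); ring.
have E4 : ((- 2%:R) * (d o1 o0 o0) * (d o1 o1 o1) + (- 2%:R) * (d o1 o0 o1) * (d o1 o1 o0) : K) = 0.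
  move: (Hhom o1 o1 o1 o1); rewrite homE !sum4E; try rewrite dE; try rewrite eE.
  rewrite /A16_2 /mk_tbl /dfun /efun /ksign /sum4f /= => h.
  by apply: (sb_eq h); ring.
have h0 : (d o1 o0 o0) = (- 1%:R) * (d o1 o1 o0) * (eps o1).
  apply: (sb_solve (c := (1%:R)) E0); ring.
have h1 : (d o1 o0 o1) = (1%:R) + (- 1%:R) * (d o1 o1 o1) * (eps o1).
  apply: (sb_solve (c := (1%:R)) E1); rewrite ?h0; ring.
have h2 : (d o1 o1 o0) = (1%:R) + (- 1%:R) * (d o1 o1 o1) * (eps o1).
  apply: (sb_solve (c := (1%:R)) E2); rewrite ?h0 ?h1; ring.
have h3 : (eps o1) = 0.
  apply: (sb_pow0 (n := 1) (c := (- 1%:R)) E3); rewrite ?h0 ?h1 ?h2; ring.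
apply: (negP K2); apply/eqP; apply: (sb_fin (s := (- 1%:R)) E4); rewrite ?h0 ?h1 ?h2 ?h3; ring.
Qed.

Lemma no_A16_3 (K : fieldType) (K2 : (2%:R : K) != 0) : ~ admits_superbialg (A16_3 K).
Proof.
move=> [d [eps H]]; case: (unpack H) => dE eE.
case: H => [_ [_ [Hco [[Hcl Hcr] [[_ Hhom] [_ Heps]]]]]].
have E0 : ((- 1%:R) + (1%:R) * (d o2 o0 o2) + (1%:R) * (d o2 o1 o2) * (eps o1) : K) = 0.
  move: (Hcl o2 o2); rewrite !sum4E; try rewrite dE; try rewrite eE.
  rewrite /A16_3 /mk_tbl /dfun /efun /ksign /sum4f /= => h.
  by apply: (sb_eq h); ring.
have E1 : ((1%:R) * (d o2 o3 o0) + (1%:R) * (d o2 o3 o1) * (eps o1) : K) = 0.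
  move: (Hcr o2 o3); rewrite !sum4E; try rewrite dE; try rewrite eE.
  rewrite /A16_3 /mk_tbl /dfun /efun /ksign /sum4f /= => h.
  by apply: (sb_eq h); ring.
have E2 : ((- 1%:R) + (1%:R) * (d o3 o3 o0) + (1%:R) * (d o3 o3 o1) * (eps o1) : K) = 0.
  move: (Hcr o3 o3); rewrite !sum4E; try rewrite dE; try rewrite eE.
  rewrite /A16_3 /mk_tbl /dfun /efun /ksign /sum4f /= => h.
  by apply: (sb_eq h); ring.
have E3 : ((1%:R) * (eps o1) : K) = 0.
  move: (Heps o2 o3); rewrite !sum4E; try rewrite dE; try rewrite eE.
  rewrite /A16_3 /mk_tbl /dfun /efun /ksign /sum4f /= => h.
  by apply: (sb_eq h); ring.
have E4 : ((- 1%:R) * (d o2 o0 o2) * (d o3 o3 o0) + (1%:R) * (d o2 o3 o0) * (d o3 o0 o2) : K) = 0.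
  move: (Hhom o3 o2 o3 o2); rewrite homE !sum4E; try rewrite dE; try rewrite eE.
  rewrite /A16_3 /mk_tbl /dfun /efun /ksign /sum4f /= => h.
  by apply: (sb_eq h); ring.
have h0 : (eps o1) = 0.
  apply: (sb_solve (c := (1%:R)) E3); ring.
have h1 : (d o2 o3 o0) = 0.
  apply: (sb_solve (c := (1%:R)) E1); rewrite ?h0; ring.
have h2 : (d o2 o0 o2) = (1%:R).
  apply: (sb_solve (c := (1%:R)) E0); rewrite ?h0 ?h1; ring.
have h3 : (d o3 o3 o0) = 0.
  apply: (sb_solve (c := (- 1%:R)) E4); rewrite ?h0 ?h1 ?h2; ring.
apply: (negP (oner_neq0 K)); apply/eqP; apply: (sb_fin (s := (- 1%:R)) E2); rewrite ?h0 ?h1 ?h2 ?h3; ring.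
Qed.

Lemma no_A18_1 (K : fieldType) (K2 : (2%:R : K) != 0) (l : K) (hl : 1 + l != 0) : ~ admits_superbialg (A18_1 l).
Proof.
move=> [d [eps H]]; case: (unpack H) => dE eE.
case: H => [_ [_ [Hco [[Hcl Hcr] [[_ Hhom] [_ Heps]]]]]].
have E0 : ((1%:R) * (d o1 o0 o0) + (1%:R) * (d o1 o1 o0) * (eps o1) : K) = 0.
  move: (Hcl o1 o0); rewrite !sum4E; try rewrite dE; try rewrite eE.
  rewrite /A18_1 /mk_tbl /dfun /efun /ksign /sum4f /= => h.
  by apply: (sb_eq h); ring.
have E1 : ((- 1%:R) + (1%:R) * (d o1 o0 o1) + (1%:R) * (d o1 o1 o1) * (eps o1) : K) = 0.
  move: (Hcl o1 o1); rewrite !sum4E; try rewrite dE; try rewrite eE.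
  rewrite /A18_1 /mk_tbl /dfun /efun /ksign /sum4f /= => h.
  by apply: (sb_eq h); ring.
have E2 : ((- 1%:R) + (1%:R) * (d o1 o1 o0) + (1%:R) * (d o1 o1 o1) * (eps o1) : K) = 0.
  move: (Hcr o1 o1); rewrite !sum4E; try rewrite dE; try rewrite eE.
  rewrite /A18_1 /mk_tbl /dfun /efun /ksign /sum4f /= => h.
  by apply: (sb_eq h); ring.
have E3 : ((- 1%:R) * ((eps o1) ^+ 2) : K) = 0.
  move: (Heps o1 o1); rewrite !sum4E; try rewrite dE; try rewrite eE.
  rewrite /A18_1 /mk_tbl /dfun /efun /ksign /sum4f /= => h.
  by apply: (sb_eq h); ring.
have E4 : ((- 2%:R) * (d o1 o0 o0) * (d o1 o1 o1) + (- 2%:R) * (d o1 o0 o1) * (d o1 o1 o0) : K) = 0.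
  move: (Hhom o1 o1 o1 o1); rewrite homE !sum4E; try rewrite dE; try rewrite eE.
  rewrite /A18_1 /mk_tbl /dfun /efun /ksign /sum4f /= => h.
  by apply: (sb_eq h); ring.
have h0 : (d o1 o0 o0) = (- 1%:R) * (d o1 o1 o0) * (eps o1).
  apply: (sb_solve (c := (1%:R)) E0); ring.
have h1 : (d o1 o0 o1) = (1%:R) + (- 1%:R) * (d o1 o1 o1) * (eps o1).
  apply: (sb_solve (c := (1%:R)) E1); rewrite ?h0; ring.
have h2 : (d o1 o1 o0) = (1%:R) + (- 1%:R) * (d o1 o1 o1) * (eps o1).
  apply: (sb_solve (c := (1%:R)) E2); rewrite ?h0 ?h1; ring.
have h3 : (eps o1) = 0.
  apply: (sb_pow0 (n := 1) (c := (- 1%:R)) E3); rewrite ?h0 ?h1 ?h2; ring.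
apply: (negP K2); apply/eqP; apply: (sb_fin (s := (- 1%:R)) E4); rewrite ?h0 ?h1 ?h2 ?h3; ring.
Qed.

Lemma no_A18_2 (K : fieldType) (K2 : (2%:R : K) != 0) (l : K) (hl : 1 + l != 0) : ~ admits_superbialg (A18_2 l).
Proof.
move=> [d [eps H]]; case: (unpack H) => dE eE.
case: H => [_ [_ [Hco [[Hcl Hcr] [[_ Hhom] [_ Heps]]]]]].
have E0 : ((1%:R) * (d o2 o0 o3) + (1%:R) * (d o2 o1 o3) * (eps o1) : K) = 0.
  move: (Hcl o2 o3); rewrite !sum4E; try rewrite dE; try rewrite eE.
  rewrite /A18_2 /mk_tbl /dfun /efun /ksign /sum4f /= => h.
  by apply: (sb_eq h); ring.
have E1 : ((- 1%:R) + (1%:R) * (d o3 o0 o3) + (1%:R) * (d o3 o1 o3) * (eps o1) : K) = 0.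
  move: (Hcl o3 o3); rewrite !sum4E; try rewrite dE; try rewrite eE.
  rewrite /A18_2 /mk_tbl /dfun /efun /ksign /sum4f /= => h.
  by apply: (sb_eq h); ring.
have E2 : ((- 1%:R) + (1%:R) * (d o2 o2 o0) + (1%:R) * (d o2 o2 o1) * (eps o1) : K) = 0.
  move: (Hcr o2 o2); rewrite !sum4E; try rewrite dE; try rewrite eE.
  rewrite /A18_2 /mk_tbl /dfun /efun /ksign /sum4f /= => h.
  by apply: (sb_eq h); ring.
have E3 : ((1%:R) * (eps o1) : K) = 0.
  move: (Heps o2 o3); rewrite !sum4E; try rewrite dE; try rewrite eE.
  rewrite /A18_2 /mk_tbl /dfun /efun /ksign /sum4f /= => h.
  by apply: (sb_eq h); ring.
have E4 : ((1%:R) * (d o1 o2 o3) + (1%:R) * (d o2 o0 o3) * (d o3 o2 o0) + (- 1%:R) * (d o2 o2 o0) * (d o3 o0 o3) : K) = 0.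
  move: (Hhom o2 o3 o2 o3); rewrite homE !sum4E; try rewrite dE; try rewrite eE.
  rewrite /A18_2 /mk_tbl /dfun /efun /ksign /sum4f /= => h.
  by apply: (sb_eq h); ring.
have E5 : ((1%:R) * (d o1 o2 o3) * l + (- 1%:R) * (d o2 o0 o3) * (d o3 o2 o0) + (1%:R) * (d o2 o2 o0) * (d o3 o0 o3) : K) = 0.
  move: (Hhom o3 o2 o2 o3); rewrite homE !sum4E; try rewrite dE; try rewrite eE.
  rewrite /A18_2 /mk_tbl /dfun /efun /ksign /sum4f /= => h.
  by apply: (sb_eq h); ring.
have h0 : (eps o1) = 0.
  apply: (sb_solve (c := (1%:R)) E3); ring.
have h1 : (d o2 o0 o3) = 0.
  apply: (sb_solve (c := (1%:R)) E0); rewrite ?h0; ring.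
have h2 : (d o2 o2 o0) = (1%:R).
  apply: (sb_solve (c := (1%:R)) E2); rewrite ?h0 ?h1; ring.
have h3 : (d o3 o0 o3) = (1%:R).
  apply: (sb_solve (c := (1%:R)) E1); rewrite ?h0 ?h1 ?h2; ring.
have h4 : (d o1 o2 o3) = (1%:R).
  apply: (sb_solve (c := (1%:R)) E4); rewrite ?h0 ?h1 ?h2 ?h3; ring.
apply: (negP hl); apply/eqP; apply: (sb_fin (s := (1%:R)) E5); rewrite ?h0 ?h1 ?h2 ?h3 ?h4; ring.
Qed.

Lemma no_A19_1 (K : fieldType) (K2 : (2%:R : K) != 0) : ~ admits_superbialg (A19_1 K).
Proof.
move=> [d [eps H]]; case: (unpack H) => dE eE.
case: H => [_ [_ [Hco [[Hcl Hcr] [[_ Hhom] [_ Heps]]]]]].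
have E0 : ((- 1%:R) + (1%:R) * (d o2 o0 o2) + (1%:R) * (d o2 o1 o2) * (eps o1) : K) = 0.
  move: (Hcl o2 o2); rewrite !sum4E; try rewrite dE; try rewrite eE.
  rewrite /A19_1 /mk_tbl /dfun /efun /ksign /sum4f /= => h.
  by apply: (sb_eq h); ring.
have E1 : ((1%:R) * (d o2 o3 o0) + (1%:R) * (d o2 o3 o1) * (eps o1) : K) = 0.
  move: (Hcr o2 o3); rewrite !sum4E; try rewrite dE; try rewrite eE.
  rewrite /A19_1 /mk_tbl /dfun /efun /ksign /sum4f /= => h.
  by apply: (sb_eq h); ring.
have E2 : ((- 1%:R) + (1%:R) * (d o3 o3 o0) + (1%:R) * (d o3 o3 o1) * (eps o1) : K) = 0.
  move: (Hcr o3 o3); rewrite !sum4E; try rewrite dE; try rewrite eE.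
  rewrite /A19_1 /mk_tbl /dfun /efun /ksign /sum4f /= => h.
  by apply: (sb_eq h); ring.
have E3 : ((1%:R) * (eps o1) : K) = 0.
  move: (Heps o2 o2); rewrite !sum4E; try rewrite dE; try rewrite eE.
  rewrite /A19_1 /mk_tbl /dfun /efun /ksign /sum4f /= => h.
  by apply: (sb_eq h); ring.
have E4 : ((1%:R) * (d o1 o3 o2) : K) = 0.
  move: (Hhom o2 o2 o3 o2); rewrite homE !sum4E; try rewrite dE; try rewrite eE.
  rewrite /A19_1 /mk_tbl /dfun /efun /ksign /sum4f /= => h.
  by apply: (sb_eq h); ring.
have E5 : ((1%:R) * (d o1 o3 o2) + (1%:R) * (d o2 o0 o2) * (d o3 o3 o0) + (- 1%:R) * (d o2 o3 o0) * (d o3 o0 o2) : K) = 0.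
  move: (Hhom o2 o3 o3 o2); rewrite homE !sum4E; try rewrite dE; try rewrite eE.
  rewrite /A19_1 /mk_tbl /dfun /efun /ksign /sum4f /= => h.
  by apply: (sb_eq h); ring.
have h0 : (d o1 o3 o2) = 0.
  apply: (sb_solve (c := (1%:R)) E4); ring.
have h1 : (eps o1) = 0.
  apply: (sb_solve (c := (1%:R)) E3); rewrite ?h0; ring.
have h2 : (d o2 o3 o0) = 0.
  apply: (sb_solve (c := (1%:R)) E1); rewrite ?h0 ?h1; ring.
have h3 : (d o2 o0 o2) = (1%:R).
  apply: (sb_solve (c := (1%:R)) E0); rewrite ?h0 ?h1 ?h2; ring.
have h4 : (d o3 o3 o0) = 0.
  apply: (sb_solve (c := (1%:R)) E5); rewrite ?h0 ?h1 ?h2 ?h3; ring.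
apply: (negP (oner_neq0 K)); apply/eqP; apply: (sb_fin (s := (- 1%:R)) E2); rewrite ?h0 ?h1 ?h2 ?h3 ?h4; ring.
Qed.

Theorem proposition4p7 (K : closedFieldType) (charK0 : [pchar K] =i pred0) :
  ~ admits_superbialg (A1_2 K) /\ ~ admits_superbialg (A3_3 K) /\
      ~ admits_superbialg (A5_1 K) /\ ~ admits_superbialg (A7_2 K) /\
      ~ admits_superbialg (A7_3 K) /\ ~ admits_superbialg (A8_3 K) /\
      ~ admits_superbialg (A10_1 K) /\ ~ admits_superbialg (A11_3 K) /\
      ~ admits_superbialg (A12_1 K) /\ ~ admits_superbialg (A16_1 K) /\
      ~ admits_superbialg (A16_2 K) /\ ~ admits_superbialg (A16_3 K) /\
      (forall l : K, l != -1 -> l != 0 -> l != 1 ->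
         ~ admits_superbialg (A18_1 l) /\ ~ admits_superbialg (A18_2 l))
  /\ ~ admits_superbialg (A19_1 K).
Proof.
have K2 : (2%:R : K) != 0 by rewrite ((pcharf0P _).1 charK0 2).
split; first exact: no_A1_2.
split; first exact: no_A3_3.
split; first exact: no_A5_1.
split; first exact: no_A7_2.
split; first exact: no_A7_3.
split; first exact: no_A8_3.
split; first exact: no_A10_1.
split; first exact: no_A11_3.
split; first exact: no_A12_1.
split; first exact: no_A16_1.
split; first exact: no_A16_2.
split; first exact: no_A16_3.
split; last exact: no_A19_1.
move=> l hl1 _ _.
have hl : 1 + l != 0 by rewrite addrC addr_eq0.
by split; [exact: no_A18_1 | exact: no_A18_2].
Qed.
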